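(* Let $\alpha\in\mathbb{C}$ with $\Re(\alpha)>-1/2$ and $\alpha\neq0$. Then for every $n\in\mathbb{N}_0$, $$p_n(x;\alpha)=\sum_{\nu=0}^{n}\left\{\frac{2^{\nu+1}(\alpha+1/2)_\nu}{\nu!}\sum_{\mu=0}^{\nu}\binom{\nu}{\mu}\frac{(-1)^{\mu}\,\Gamma(2\alpha+\mu)}{\Gamma(2\alpha+\mu+\nu+1)}(\alpha+\mu)^{2n+1}\right\}x^{\nu}.$$
   Context: Let $\mathcal{A}$ be the differential operator $\mathcal{A}f(x)=-x^2f''(x)-xf'(x)+x^2f(x)$ on functions of $x>0$, with iterates $\mathcal{A}^n$ ($\mathcal{A}^0$ = identity). For $\alpha\in\mathbb{C}$, $n\in\mathbb{N}_0$, $p_n(x;\alpha)=(-1)^n e^{x}x^{-\alpha}\,\mathcal{A}^n\big(e^{-x}x^{\alpha}\big)$ (a polynomial in $x$ of degree $n$ when $\Re(\alpha)>-1/2$). $(y)_\nu$ is the Pochhammer symbol, $(y)_0=1$, $(y)_\nu=\prod_{j=0}^{\nu-1}(y+j)$. *)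

(* Defs.v *)
From Stdlib Require Import Reals Arith Factorial.
Open Scope R_scope.

Definition Cx : Type := (R * R)%type.
Definition Re (z : Cx) : R := fst z.
Definition Im (z : Cx) : R := snd z.
Definition CR (r : R) : Cx := (r, 0).
Definition Cadd (z w : Cx) : Cx := (fst z + fst w, snd z + snd w).
Definition Cneg (z : Cx) : Cx := (- fst z, - snd z).
Definition Cmul (z w : Cx) : Cx :=
  (fst z * fst w - snd z * snd w, fst z * snd w + snd z * fst w).
Definition Cscale (r : R) (z : Cx) : Cx := (r * fst z, r * snd z).
Definition Cinv (z : Cx) : Cx :=
  (fst z / (fst z ^ 2 + snd z ^ 2), - snd z / (fst z ^ 2 + snd z ^ 2)).
Fixpoint Cpow (z : Cx) (n : nat) : Cx :=
  match n with O => CR 1 | S k => Cmul z (Cpow z k) end.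

Fixpoint Csum (f : nat -> Cx) (n : nat) : Cx :=
  match n with O => f O | S k => Cadd (Csum f k) (f (S k)) end.

Fixpoint Cpoch (y : Cx) (k : nat) : Cx :=
  match k with O => CR 1 | S j => Cmul (Cpoch y j) (Cadd y (CR (INR j))) end.

(* principal power x^a = exp(a ln x) for real x > 0 and complex a *)
Definition cpow_real (x : R) (a : Cx) : Cx :=
  (exp (Re a * ln x) * cos (Im a * ln x), exp (Re a * ln x) * sin (Im a * ln x)).

Definition Cderiv (f : R -> Cx) (x : R) (d : Cx) : Prop :=
  derivable_pt_lim (fun t => fst (f t)) x (fst d) /\
  derivable_pt_lim (fun t => snd (f t)) x (snd d).

(* The operator  A h (x) = - x^2 h''(x) - x h'(x) + x^2 h(x)  given h' = h1, h'' = h2 *)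
Definition Aop (h h1 h2 : R -> Cx) (x : R) : Cx :=
  Cadd (Cadd (Cscale (- x ^ 2) (h2 x)) (Cscale (- x) (h1 x))) (Cscale (x ^ 2) (h x)).

(* Aiter f n g  :<->  g = A^n f on (0,oo), all required derivatives existing on (0,oo). *)
Inductive Aiter (f : R -> Cx) : nat -> (R -> Cx) -> Prop :=
| Aiter0 : Aiter f O f
| AiterS : forall n g g1 g2,
    Aiter f n g ->
    (forall x, 0 < x -> Cderiv g x (g1 x)) ->
    (forall x, 0 < x -> Cderiv g1 x (g2 x)) ->
    Aiter f (S n) (Aop g g1 g2).

Definition seed (alpha : Cx) (x : R) : Cx := Cscale (exp (- x)) (cpow_real x alpha).

(* coefficient of x^nu in the claimed formula; Gamma(2a+mu)/Gamma(2a+mu+nu+1)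
   is written as 1/(2a+mu)_{nu+1} *)
Definition coef (alpha : Cx) (n nu : nat) : Cx :=
  Cmul (Cscale (2 ^ (nu + 1) / INR (fact nu)) (Cpoch (Cadd alpha (CR (1/2))) nu))
    (Csum (fun mu =>
        Cscale (Binomial.C nu mu * (-1) ^ mu)
          (Cmul (Cinv (Cpoch (Cadd (Cscale 2 alpha) (CR (INR mu))) (nu + 1)))
                (Cpow (Cadd alpha (CR (INR mu))) (2 * n + 1)))) nu).

(* Main.v *)
From Stdlib Require Import Reals Lra Lia.
From Coquelicot Require Import Coquelicot.
Require Import Defs.
Open Scope R_scope.

Ltac toC := match goal with |- @eq _ ?a ?b => change (@eq C a b) end; change Cmul with Cmult; change Cadd with Cplus; change CR with RtoC; change Cneg with Copp.
Ltac Cring := toC; ring.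
Ltac Cfield := toC; field.

Lemma Cscale_C r z : Cscale r z = (RtoC r * z)%C.
Proof. destruct z as [a b]; unfold Cscale, RtoC, Cmult; simpl; f_equal; ring. Qed.
Lemma Cadd_C z w : Cadd z w = (z + w)%C. Proof. reflexivity. Qed.
Lemma Cmul_C z w : Cmul z w = (z * w)%C. Proof. reflexivity. Qed.
Lemma Cinv_C z : Defs.Cinv z = Complex.Cinv z. Proof. reflexivity. Qed.
Lemma Cneg_C z : Cneg z = (- z)%C. Proof. reflexivity. Qed.
Lemma CR_C r : CR r = RtoC r. Proof. reflexivity. Qed.
Lemma Cpow_S z n : Cpow z (S n) = (z * Cpow z n)%C. Proof. reflexivity. Qed.
Lemma Cpoch_S y k : Cpoch y (S k) = (Cpoch y k * (y + RtoC (INR k)))%C.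
Proof. reflexivity. Qed.
Lemma Cpoch_0 y : Cpoch y 0 = RtoC 1. Proof. reflexivity. Qed.

Lemma Csum_S f n : Csum f (S n) = (Csum f n + f (S n))%C. Proof. reflexivity. Qed.
Lemma Csum_0 f : Csum f 0 = f 0%nat. Proof. reflexivity. Qed.

Lemma Csum_ext f g n : (forall k, (k <= n)%nat -> f k = g k) -> Csum f n = Csum g n.
Proof.
  induction n; intros H.
  - rewrite !Csum_0; apply H; lia.
  - rewrite !Csum_S, IHn, H; auto.
Qed.

Lemma Csum_plus f g n : Csum (fun k => (f k + g k)%C) n = (Csum f n + Csum g n)%C.
Proof. induction n; rewrite ?Csum_0, ?Csum_S; [reflexivity|rewrite IHn; Cring]. Qed.

Lemma Csum_scal c f n : Csum (fun k => (c * f k)%C) n = (c * Csum f n)%C.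
Proof. induction n; rewrite ?Csum_0, ?Csum_S; [reflexivity|rewrite IHn; Cring]. Qed.

Lemma Csum_shift f n : Csum f (S n) = (f 0%nat + Csum (fun k => f (S k)) n)%C.
Proof.
  induction n.
  - rewrite Csum_S, !Csum_0; Cring.
  - rewrite Csum_S, IHn, (Csum_S (fun k => f (S k))); Cring.
Qed.

Lemma Csum_zero f n : (forall k, (k <= n)%nat -> f k = RtoC 0) -> Csum f n = RtoC 0.
Proof.
  induction n; intros H.
  - rewrite Csum_0; apply H; lia.
  - rewrite Csum_S, IHn, H; auto. Cring.
Qed.

Lemma Cmult_nz (a b : C) : a <> RtoC 0 -> b <> RtoC 0 -> (a * b)%C <> RtoC 0.
Proof.
  intros Ha Hb H. apply Ha.
  replace a with (a * b * / b)%C by (field; auto). rewrite H. Cring.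
Qed.

Lemma Cpoch_nz y k : (forall j, (y + RtoC (INR j))%C <> RtoC 0) -> Cpoch y k <> RtoC 0.
Proof.
  intros H; induction k.
  - rewrite Cpoch_0. intro E. injection E. lra.
  - rewrite Cpoch_S. apply Cmult_nz; auto.
Qed.

Lemma RtoC_INR_S k : RtoC (INR (S k)) = (RtoC (INR k) + RtoC 1)%C.
Proof. rewrite S_INR, RtoC_plus. reflexivity. Qed.

Lemma Cpoch_S_l y k : Cpoch y (S k) = (y * Cpoch (y + RtoC 1) k)%C.
Proof.
  induction k.
  - rewrite Cpoch_S, !Cpoch_0. simpl INR. Cring.
  - rewrite Cpoch_S, IHk, Cpoch_S, RtoC_INR_S. Cring.
Qed.

Fixpoint binom (n k : nat) : R :=
  match n, k with
  | _, O => 1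
  | O, S _ => 0
  | S n', S k' => binom n' k' + binom n' (S k')
  end.

Lemma binom_gt n k : (n < k)%nat -> binom n k = 0.
Proof.
  revert k; induction n; intros k H; destruct k; try lia; simpl; auto.
  rewrite !IHn; try lia. ring.
Qed.

Lemma C_n0 n : Binomial.C n 0 = 1.
Proof. unfold Binomial.C. rewrite Nat.sub_0_r. simpl (Factorial.fact 0). simpl INR.
  field. apply INR_fact_neq_0. Qed.

Lemma C_nn n : Binomial.C n n = 1.
Proof. unfold Binomial.C. rewrite Nat.sub_diag. simpl (Factorial.fact 0). simpl INR.
  field. apply INR_fact_neq_0. Qed.

Lemma binom_C n k : (k <= n)%nat -> binom n k = Binomial.C n k.
Proof.
  revert k; induction n; intros k H.
  - destruct k; [|lia]. simpl. now rewrite C_n0.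
  - destruct k.
    + simpl. now rewrite C_n0.
    + simpl. destruct (Nat.eq_dec k n) as [->|Hk].
      * rewrite IHn, binom_gt, !C_nn by lia. ring.
      * rewrite !IHn by lia. apply pascal. lia.
Qed.

Lemma binom_absorb m mu :
  (INR (S m) - INR mu) * binom (S m) mu = INR (S m) * binom m mu.
Proof.
  destruct (Compare_dec.le_lt_dec mu m) as [H|H].
  - rewrite !binom_C by lia. unfold Binomial.C.
    rewrite (Nat.sub_succ_l mu m H).
    replace (Factorial.fact (S m)) with (S m * Factorial.fact m)%nat by reflexivity.
    replace (Factorial.fact (S (m - mu))) with (S (m - mu) * Factorial.fact (m - mu))%nat by reflexivity.
    rewrite !mult_INR.
    replace (INR (S m) - INR mu) with (INR (S (m - mu))).
    2:{ rewrite <- minus_INR by lia. f_equal. lia. }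
    field. pose proof (INR_fact_neq_0 mu). pose proof (INR_fact_neq_0 (m - mu)).
    split; [|split]; auto. apply not_0_INR. lia.
  - destruct (Nat.eq_dec mu (S m)) as [->|Hm].
    + rewrite (binom_gt m (S m)) by lia. ring.
    + rewrite !binom_gt by lia. ring.
Qed.

Lemma binom_n0 n : binom n 0 = 1.
Proof. destruct n; reflexivity. Qed.

Lemma binom_split nu (g : nat -> C) :
  Csum (fun mu => (RtoC (binom (S nu) mu) * g mu)%C) (S nu) =
  (Csum (fun mu => (RtoC (binom nu mu) * g mu)%C) nu +
   Csum (fun mu => (RtoC (binom nu mu) * g (S mu))%C) nu)%C.
Proof.
  rewrite Csum_shift.
  assert (E : Csum (fun mu => (RtoC (binom nu mu) * g mu)%C) (S nu) =
              Csum (fun mu => (RtoC (binom nu mu) * g mu)%C) nu).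
  { rewrite Csum_S, binom_gt by lia. Cring. }
  rewrite <- E, Csum_shift.
  rewrite (Csum_ext (fun k => (RtoC (binom (S nu) (S k)) * g (S k))%C)
     (fun k => (RtoC (binom nu k) * g (S k) + RtoC (binom nu (S k)) * g (S k))%C)).
  2:{ intros k _. simpl binom. rewrite RtoC_plus. Cring. }
  rewrite Csum_plus, !binom_n0. simpl binom. Cring.
Qed.

Definition Dsum (nu : nat) (t : C) (k : nat) : C :=
  Csum (fun mu => (RtoC (binom nu mu) * (RtoC ((-1) ^ mu) * / Cpoch (t + RtoC (INR mu)) k))%C) nu.

Lemma Dsum_eq nu : forall t k, (forall j, (t + RtoC (INR j))%C <> RtoC 0) ->
  Dsum nu t k = (Cpoch (RtoC (INR k)) nu / Cpoch t (k + nu))%C.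
Proof.
  induction nu; intros t k Ht.
  - unfold Dsum. rewrite Csum_0, Cpoch_0, Nat.add_0_r. simpl binom. simpl pow. simpl INR.
    replace (t + RtoC 0)%C with t by Cring. Cfield.
    apply (Cpoch_nz t k Ht).
  - unfold Dsum. rewrite binom_split. fold (Dsum nu t k).
    rewrite (Csum_ext _ (fun mu => (RtoC (-1) * (RtoC (binom nu mu) * (RtoC ((-1) ^ mu) *
        / Cpoch ((t + RtoC 1) + RtoC (INR mu)) k)))%C)).
    2:{ intros mu _. rewrite RtoC_INR_S. simpl pow. rewrite RtoC_mult.
        replace (t + (RtoC (INR mu) + RtoC 1))%C with (t + RtoC 1 + RtoC (INR mu))%C by Cring.
        Cring. }
    rewrite Csum_scal. fold (Dsum nu (t + RtoC 1)%C k).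
    assert (Ht1 : forall j, (t + RtoC 1 + RtoC (INR j))%C <> RtoC 0).
    { intro j. replace (t + RtoC 1 + RtoC (INR j))%C with (t + RtoC (INR (S j)))%C.
      apply Ht. rewrite RtoC_INR_S. Cring. }
    rewrite (IHnu t k Ht), (IHnu (t + RtoC 1)%C k Ht1).
    rewrite Cpoch_S. rewrite Nat.add_succ_r.
    set (m := (k + nu)%nat).
    assert (E1 : Cpoch t (S m) = (Cpoch t m * (t + RtoC (INR m)))%C) by apply Cpoch_S.
    rewrite Cpoch_S_l in E1.
    assert (Nt : t <> RtoC 0). { replace t with (t + RtoC (INR 0))%C. apply Ht. simpl INR. Cring. }
    assert (Nm : (t + RtoC (INR m))%C <> RtoC 0) by apply Ht.
    assert (NQ : Cpoch (t + RtoC 1)%C m <> RtoC 0) by (apply Cpoch_nz; auto).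
    assert (NQ0 : Cpoch t m <> RtoC 0) by (apply Cpoch_nz; auto).
    rewrite Cpoch_S.
    replace (Cpoch t m) with (t * Cpoch (t + RtoC 1)%C m / (t + RtoC (INR m)))%C.
    2:{ rewrite E1. Cfield. auto. }
    replace (RtoC (INR k) + RtoC (INR nu))%C with (RtoC (INR m)).
    2:{ unfold m. rewrite plus_INR, RtoC_plus. reflexivity. }
    Cfield. repeat split; auto.
Qed.

Definition Kc (alpha : C) (nu : nat) : C :=
  (RtoC (2 ^ (nu + 1) / INR (Factorial.fact nu)) * Cpoch (alpha + RtoC (1/2))%C nu)%C.
Definition Tm (alpha : C) (nu n mu : nat) : C :=
  (RtoC (binom nu mu) * (RtoC ((-1) ^ mu) *
    (/ Cpoch (RtoC 2 * alpha + RtoC (INR mu))%C (S nu) * Cpow (alpha + RtoC (INR mu))%C (2 * n + 1))))%C.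

Lemma coef_eq alpha n nu : coef alpha n nu = (Kc alpha nu * Csum (Tm alpha nu n) nu)%C.
Proof.
  unfold coef, Kc. rewrite Cmul_C, Cscale_C. f_equal.
  apply Csum_ext; intros mu Hmu. unfold Tm.
  rewrite Cscale_C. rewrite (binom_C nu mu Hmu). rewrite RtoC_mult. change Cmul with Cmult. change Cadd with Cplus. change CR with RtoC. change Defs.Cinv with Complex.Cinv. rewrite Nat.add_1_r.
  rewrite Cscale_C. Cring.
Qed.

Lemma Cpow_SS z n : Cpow z (2 * S n + 1) = (z * z * Cpow z (2 * n + 1))%C.
Proof. replace (2 * S n + 1)%nat with (S (S (2 * n + 1))) by lia. rewrite !Cpow_S. Cring. Qed.

Lemma nz_shift alpha (Hnz2 : forall j, (RtoC 2 * alpha + RtoC (INR j))%C <> RtoC 0) mu :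
  forall j, (RtoC 2 * alpha + RtoC (INR mu) + RtoC (INR j))%C <> RtoC 0.
Proof.
  intro j. replace (RtoC 2 * alpha + RtoC (INR mu) + RtoC (INR j))%C
    with (RtoC 2 * alpha + RtoC (INR (mu + j)))%C. apply Hnz2.
  rewrite plus_INR, RtoC_plus. Cring.
Qed.

Lemma binom_absorbC m mu :
  (RtoC (binom (S m) mu) * (RtoC (INR mu) - RtoC (INR (S m))))%C =
  (- RtoC (INR (S m)) * RtoC (binom m mu))%C.
Proof.
  rewrite <- RtoC_minus, <- RtoC_opp, <- !RtoC_mult. f_equal.
  pose proof (binom_absorb m mu) as H. transitivity (- ((INR (S m) - INR mu) * binom (S m) mu)); [ring|]. rewrite H; ring.
Qed.

Lemma coef_rec alpha (Hnz2 : forall j, (RtoC 2 * alpha + RtoC (INR j))%C <> RtoC 0) n m :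
  coef alpha (S n) (S m) =
  ((RtoC (INR (S m)) + alpha) * (RtoC (INR (S m)) + alpha) * coef alpha n (S m)
   - (RtoC 2 * RtoC (INR (S m)) + RtoC 2 * alpha - RtoC 1) * coef alpha n m)%C.
Proof.
  rewrite !coef_eq.
  assert (Hs : (Csum (Tm alpha (S m) (S n)) (S m) -
     (RtoC (INR (S m)) + alpha) * (RtoC (INR (S m)) + alpha) * Csum (Tm alpha (S m) n) (S m))%C
     = (- RtoC (INR (S m)) * Csum (Tm alpha m n) m)%C).
  { rewrite <- Csum_scal.
    replace (Csum (Tm alpha (S m) (S n)) (S m) -
       Csum (fun k => (RtoC (INR (S m)) + alpha) * (RtoC (INR (S m)) + alpha) * Tm alpha (S m) n k) (S m))%C
      with (Csum (fun k => Tm alpha (S m) (S n) k +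
        (RtoC (-1)) * ((RtoC (INR (S m)) + alpha) * (RtoC (INR (S m)) + alpha) * Tm alpha (S m) n k)) (S m))%C.
    2:{ rewrite Csum_plus, Csum_scal. Cring. }
    rewrite (Csum_ext _ (fun k => - RtoC (INR (S m)) * Tm alpha m n k)%C).
    2:{ intros mu _. unfold Tm. rewrite Cpow_SS, (Cpoch_S _ (S m)).
        set (P := Cpoch (RtoC 2 * alpha + RtoC (INR mu))%C (S m)).
        set (W := Cpow (alpha + RtoC (INR mu))%C (2 * n + 1)).
        assert (NP : P <> RtoC 0) by (apply Cpoch_nz, nz_shift; auto).
        assert (NL : (RtoC 2 * alpha + RtoC (INR mu) + RtoC (INR (S m)))%C <> RtoC 0)
          by (apply nz_shift; auto).
        transitivity (RtoC (binom (S m) mu) * (RtoC (INR mu) - RtoC (INR (S m))) *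
                      (RtoC ((-1) ^ mu) * / P * W))%C.
        - Cfield. auto.
        - rewrite binom_absorbC. Cfield. auto. }
    rewrite Csum_S.
    replace (Tm alpha m n (S m)) with (RtoC 0).
    2:{ unfold Tm. rewrite binom_gt by lia. Cring. }
    rewrite Csum_scal. Cring. }
  assert (HK : (RtoC (INR (S m)) * Kc alpha (S m) =
                (RtoC 2 * RtoC (INR (S m)) + RtoC 2 * alpha - RtoC 1) * Kc alpha m)%C).
  { unfold Kc. rewrite Cpoch_S.
    replace (S m + 1)%nat with (S (m + 1)) by lia.
    replace (Factorial.fact (S m)) with (S m * Factorial.fact m)%nat by reflexivity.
    rewrite mult_INR. simpl pow.
    replace (RtoC (2 * 2 ^ (m + 1) / (INR (S m) * INR (Factorial.fact m))))
      with (RtoC 2 * RtoC (2 ^ (m + 1) / INR (Factorial.fact m)) / RtoC (INR (S m)))%C.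
    2:{ rewrite <- RtoC_mult, <- RtoC_div. f_equal. field.
        split; [apply INR_fact_neq_0|apply not_0_INR; lia].
        apply not_0_INR; lia. }
    rewrite RtoC_INR_S.
    assert (N1 : (RtoC (INR m) + RtoC 1)%C <> RtoC 0).
    { rewrite <- RtoC_plus. intro E. apply RtoC_inj in E. pose proof (pos_INR m). lra. }
    replace (RtoC (1/2)) with (/ RtoC 2)%C.
    2:{ rewrite <- RtoC_inv by lra. f_equal. lra. }
    Cfield. exact N1. }
  transitivity (Kc alpha (S m) * (Csum (Tm alpha (S m) (S n)) (S m) -
     (RtoC (INR (S m)) + alpha) * (RtoC (INR (S m)) + alpha) * Csum (Tm alpha (S m) n) (S m))
     + (RtoC (INR (S m)) + alpha) * (RtoC (INR (S m)) + alpha) * (Kc alpha (S m) * Csum (Tm alpha (S m) n) (S m)))%C.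
  { Cring. }
  rewrite Hs.
  transitivity (- (RtoC (INR (S m)) * Kc alpha (S m)) * Csum (Tm alpha m n) m
     + (RtoC (INR (S m)) + alpha) * (RtoC (INR (S m)) + alpha) * (Kc alpha (S m) * Csum (Tm alpha (S m) n) (S m)))%C.
  { Cring. }
  rewrite HK. Cring.
Qed.

Lemma coef_rec0 alpha (Hnz2 : forall j, (RtoC 2 * alpha + RtoC (INR j))%C <> RtoC 0) n :
  coef alpha (S n) 0 = (alpha * alpha * coef alpha n 0)%C.
Proof.
  rewrite !coef_eq, !Csum_0. unfold Tm. rewrite Cpow_SS. change (INR 0) with 0. Cring.
Qed.

Lemma coef00 alpha (Hnz2 : forall j, (RtoC 2 * alpha + RtoC (INR j))%C <> RtoC 0) :
  coef alpha 0 0 = RtoC 1.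
Proof.
  rewrite coef_eq, Csum_0. unfold Kc, Tm. simpl binom. simpl pow. simpl INR.
  rewrite !Cpoch_S, !Cpoch_0. simpl INR. simpl Cpow.
  pose proof (Hnz2 0%nat) as H. simpl INR in H.
  replace (RtoC (2 * 1 / 1)) with (RtoC 2) by (f_equal; field).
  unfold Cpow. Cfield. intro E; apply H; rewrite E; Cring.
Qed.

Lemma poch_nat2 m :
  (RtoC 2 * Cpoch (RtoC (INR (S m))) (S m))%C = Cpoch (RtoC (INR (S (S m)))) (S m).
Proof.
  set (x := RtoC (INR (S m))).
  assert (E2 := Cpoch_S_l x (S m)). rewrite Cpoch_S in E2.
  assert (N : x <> RtoC 0).
  { intro H. apply RtoC_inj in H. apply (not_0_INR (S m)); auto. }
  replace (x + RtoC 1)%C with (RtoC (INR (S (S m)))) in E2.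
  2:{ rewrite (RtoC_INR_S (S m)). reflexivity. }
  transitivity (/ x * (Cpoch x (S m) * (x + x)))%C.
  { Cfield. exact N. }
  change (INR (S m)) with (INR (S m)) in E2. fold x in E2. rewrite E2. Cfield. exact N.
Qed.

Lemma coef0S alpha (Hnz2 : forall j, (RtoC 2 * alpha + RtoC (INR j))%C <> RtoC 0) m :
  coef alpha 0 (S m) = RtoC 0.
Proof.
  rewrite coef_eq.
  enough (H : Csum (Tm alpha (S m) 0) (S m) = RtoC 0) by (rewrite H; Cring).
  rewrite (Csum_ext _ (fun mu => RtoC (1/2) * (RtoC 2 * (RtoC (binom (S m) mu) * (RtoC ((-1) ^ mu) *
      / Cpoch ((RtoC 2 * alpha + RtoC 1) + RtoC (INR mu)) (S m))) +
      (- (RtoC 2 * alpha)) * (RtoC (binom (S m) mu) * (RtoC ((-1) ^ mu) *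
      / Cpoch ((RtoC 2 * alpha) + RtoC (INR mu)) (S (S m))))))%C).
  2:{ intros mu _. unfold Tm. change (2 * 0 + 1)%nat with 1%nat. rewrite Cpow_S.
      rewrite !(Cpoch_S_l (RtoC 2 * alpha + RtoC (INR mu))%C (S m)).
      replace (RtoC 2 * alpha + RtoC (INR mu) + RtoC 1)%C
        with (RtoC 2 * alpha + RtoC 1 + RtoC (INR mu))%C by Cring.
      assert (N1 : (RtoC 2 * alpha + RtoC (INR mu))%C <> RtoC 0) by apply Hnz2.
      assert (N2 : Cpoch (RtoC 2 * alpha + RtoC 1 + RtoC (INR mu))%C (S m) <> RtoC 0).
      { apply Cpoch_nz. intro j.
        replace (RtoC 2 * alpha + RtoC 1 + RtoC (INR mu) + RtoC (INR j))%C
          with (RtoC 2 * alpha + RtoC (INR (S (mu + j))))%C. apply Hnz2.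
        rewrite RtoC_INR_S, plus_INR, RtoC_plus. Cring. }
      replace (RtoC (1/2)) with (/ RtoC 2)%C.
      2:{ rewrite <- RtoC_inv by lra. f_equal. lra. }
      simpl Cpow. Cfield. all: try (repeat split; auto; intro E; apply RtoC_inj in E; lra). }
  rewrite Csum_scal, Csum_plus, !Csum_scal.
  fold (Dsum (S m) (RtoC 2 * alpha + RtoC 1)%C (S m)).
  fold (Dsum (S m) (RtoC 2 * alpha)%C (S (S m))).
  assert (Ht1 : forall j, (RtoC 2 * alpha + RtoC 1 + RtoC (INR j))%C <> RtoC 0).
  { intro j. replace (RtoC 2 * alpha + RtoC 1 + RtoC (INR j))%C
      with (RtoC 2 * alpha + RtoC (INR (S j)))%C. apply Hnz2.
    rewrite RtoC_INR_S. Cring. }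
  rewrite !Dsum_eq by auto.
  replace (S (S m) + S m)%nat with (S (S m + S m)) by lia.
  rewrite (Cpoch_S_l (RtoC 2 * alpha)%C (S m + S m)). rewrite <- poch_nat2.
  assert (N0 : (RtoC 2 * alpha)%C <> RtoC 0).
  { replace (RtoC 2 * alpha)%C with (RtoC 2 * alpha + RtoC (INR 0))%C. apply Hnz2.
    simpl INR. Cring. }
  assert (NQ : Cpoch (RtoC 2 * alpha + RtoC 1)%C (S m + S m) <> RtoC 0) by (apply Cpoch_nz; auto).
  Cfield. split; auto. intro E; apply N0; rewrite E; Cring.
Qed.

Lemma coef_vanish alpha (Hnz2 : forall j, (RtoC 2 * alpha + RtoC (INR j))%C <> RtoC 0) n :
  forall nu, (n < nu)%nat -> coef alpha n nu = RtoC 0.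
Proof.
  induction n; intros nu H.
  - destruct nu; [lia|]. apply coef0S; auto.
  - destruct nu; [lia|]. rewrite coef_rec by auto. rewrite !IHn by lia. Cring.
Qed.

Lemma nz2 alpha : -1/2 < Re alpha -> alpha <> (0,0) ->
  forall j, (RtoC 2 * alpha + RtoC (INR j))%C <> RtoC 0.
Proof.
  destruct alpha as [a b]; unfold Re; simpl; intros Hre Hnz j E.
  unfold Cmult, Cplus, RtoC in E; simpl in E. injection E as E1 E2.
  destruct j.
  - simpl in E1, E2. apply Hnz. f_equal; lra.
  - pose proof (pos_INR j). rewrite S_INR in E1. lra.
Qed.

Definition Poly (q : nat -> C) m x := Csum (fun k => (RtoC (x ^ k) * q k)%C) m.
Definition Poly1 (q : nat -> C) m x := Csum (fun k => (RtoC (INR k * x ^ (pred k)) * q k)%C) m.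
Definition Poly2 (q : nat -> C) m x :=
  Csum (fun k => (RtoC (INR k * INR (pred k) * x ^ (pred (pred k))) * q k)%C) m.

Lemma Csum_comb n (f1 f2 f3 f4 f5 : nat -> C) c1 c2 c3 c4 c5 :
  (c1 * Csum f1 n + c2 * Csum f2 n - c3 * Csum f3 n + c4 * Csum f4 n - c5 * Csum f5 n)%C =
  Csum (fun k => c1 * f1 k + c2 * f2 k - c3 * f3 k + c4 * f4 k - c5 * f5 k)%C n.
Proof. induction n; rewrite ?Csum_0, ?Csum_S; [Cring|]. rewrite <- IHn. Cring. Qed.

Lemma Csum_sub n (f g : nat -> C) : (Csum f n - Csum g n)%C = Csum (fun k => f k - g k)%C n.
Proof. induction n; rewrite ?Csum_0, ?Csum_S; [Cring|]. rewrite <- IHn. Cring. Qed.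

Lemma poly_step alpha (Hnz2 : forall j, (RtoC 2 * alpha + RtoC (INR j))%C <> RtoC 0) n x :
  (RtoC (x ^ 2) * Poly2 (coef alpha n) n x
   + (RtoC 2 * alpha + RtoC 1) * RtoC x * Poly1 (coef alpha n) n x
   - RtoC 2 * RtoC (x ^ 2) * Poly1 (coef alpha n) n x
   + alpha * alpha * Poly (coef alpha n) n x
   - (RtoC 2 * alpha + RtoC 1) * RtoC x * Poly (coef alpha n) n x)%C
  = Poly (coef alpha (S n)) (S n) x.
Proof.
  set (c := coef alpha n).
  set (A := fun k => (RtoC (x ^ k) * ((RtoC (INR k) + alpha) * (RtoC (INR k) + alpha) * c k))%C).
  set (B := fun k => (RtoC (x ^ S k) * ((RtoC 2 * RtoC (INR k) + RtoC 2 * alpha + RtoC 1) * c k))%C).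
  transitivity (Csum A n - Csum B n)%C.
  { unfold Poly, Poly1, Poly2. rewrite Csum_comb, Csum_sub. apply Csum_ext. intros k _.
    unfold A, B. destruct k as [|[|k]].
    - simpl pred. simpl INR. simpl pow. rewrite !RtoC_mult. change (INR 0) with 0. Cring.
    - simpl pred. simpl INR. simpl pow. rewrite !RtoC_mult. Cring.
    - simpl pred. rewrite !S_INR. simpl pow. rewrite !RtoC_mult, !RtoC_plus. Cring. }
  unfold Poly. rewrite Csum_shift.
  assert (EA : Csum A n = (A 0%nat + Csum (fun k => A (S k)) n)%C).
  { rewrite <- Csum_shift, Csum_S. replace (A (S n)) with (RtoC 0). 2:{ unfold A, c. rewrite (coef_vanish alpha Hnz2 n (S n)) by lia. Cring. }
    symmetry; apply Cplus_0_r. }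
  rewrite EA. unfold c. rewrite coef_rec0 by auto.
  transitivity (A 0%nat + Csum (fun k => (A (S k) + (RtoC (-1)) * B k)%C) n)%C.
  { rewrite Csum_plus, Csum_scal. Cring. }
  unfold A. f_equal.
  { fold c. change (INR 0) with 0. change (x ^ 0) with 1. Cring. }
  apply Csum_ext. intros k _. unfold B. rewrite coef_rec by auto. fold c.
  rewrite RtoC_INR_S. Cring.
Qed.

Lemma dpl_eq f x l l' : derivable_pt_lim f x l -> l = l' -> derivable_pt_lim f x l'.
Proof. intros H <-; exact H. Qed.

Lemma Cderiv_eq f x d d' : Cderiv f x d -> d = d' -> Cderiv f x d'.
Proof. intros H <-; exact H. Qed.

Lemma Cderiv_add f g x df dg :
  Cderiv f x df -> Cderiv g x dg -> Cderiv (fun t => (f t + g t)%C) x (df + dg)%C.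
Proof.
  intros [F1 F2] [G1 G2]. split; simpl.
  - exact (derivable_pt_lim_plus (fun t => fst (f t)) (fun t => fst (g t)) x _ _ F1 G1).
  - exact (derivable_pt_lim_plus (fun t => snd (f t)) (fun t => snd (g t)) x _ _ F2 G2).
Qed.

Lemma Cderiv_mul f g x df dg :
  Cderiv f x df -> Cderiv g x dg -> Cderiv (fun t => (f t * g t)%C) x (df * g x + f x * dg)%C.
Proof.
  intros [F1 F2] [G1 G2]. split; simpl.
  - eapply dpl_eq.
    + exact (derivable_pt_lim_minus (fun t => fst (f t) * fst (g t)) (fun t => snd (f t) * snd (g t)) x _ _
        (derivable_pt_lim_mult _ _ x _ _ F1 G1) (derivable_pt_lim_mult _ _ x _ _ F2 G2)).
    + simpl; ring.
  - eapply dpl_eq.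
    + exact (derivable_pt_lim_plus (fun t => fst (f t) * snd (g t)) (fun t => snd (f t) * fst (g t)) x _ _
        (derivable_pt_lim_mult _ _ x _ _ F1 G2) (derivable_pt_lim_mult _ _ x _ _ F2 G1)).
    + simpl; ring.
Qed.

Lemma Cderiv_RtoC r x dr : derivable_pt_lim r x dr -> Cderiv (fun t => RtoC (r t)) x (RtoC dr).
Proof.
  intros H. split; simpl; auto. apply derivable_pt_lim_const.
Qed.

Lemma Cderiv_const (z : C) x : Cderiv (fun _ => z) x (RtoC 0).
Proof. split; simpl; apply derivable_pt_lim_const. Qed.

Lemma Cderiv_ext f g x d : 0 < x -> (forall t, 0 < t -> f t = g t) -> Cderiv f x d -> Cderiv g x d.
Proof.
  intros Hx E [F1 F2].
  assert (L : forall h : Cx -> R, locally x (fun t => h (f t) = h (g t))).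
  { intro h. apply (locally_interval _ x (Finite 0) p_infty); simpl; auto.
    intros y Hy _. rewrite E; auto. }
  split; apply is_derive_Reals; apply is_derive_Reals in F1; apply is_derive_Reals in F2.
  - exact (is_derive_ext_loc _ _ x _ (L fst) F1).
  - exact (is_derive_ext_loc _ _ x _ (L snd) F2).
Qed.

Lemma Cderiv_cpow a x : 0 < x ->
  Cderiv (fun t => cpow_real t a) x (RtoC (/ x) * (a * cpow_real x a))%C.
Proof.
  intros Hx. destruct a as [a b]. unfold cpow_real, Re, Im; simpl.
  split; simpl; apply is_derive_Reals.
  - eapply is_derive_ext. { intro t. reflexivity. }
    auto_derive. { auto. }
    field. lra.
  - auto_derive. { auto. }
    field. lra.
Qed.

Lemma Cderiv_sum (F : nat -> R -> C) (dF : nat -> C) x m :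
  (forall k, Cderiv (F k) x (dF k)) ->
  Cderiv (fun t => Csum (fun k => F k t) m) x (Csum dF m).
Proof.
  intros H. induction m.
  - exact (H 0%nat).
  - exact (Cderiv_add (fun t => Csum (fun k => F k t) m) (F (S m)) x _ _ IHm (H (S m))).
Qed.

Lemma Cderiv_Rmon (c : R) k (q : C) x :
  Cderiv (fun t => (RtoC (c * t ^ k) * q)%C) x (RtoC (c * (INR k * x ^ pred k)) * q)%C.
Proof.
  eapply Cderiv_eq.
  - apply (Cderiv_mul (fun t => RtoC (c * t ^ k)) (fun _ => q)).
    + apply Cderiv_RtoC. apply (derivable_pt_lim_scal (fun t => t ^ k) c x). apply derivable_pt_lim_pow.
    + apply Cderiv_const.
  - Cring.
Qed.

Lemma Cderiv_Poly q m x : Cderiv (Poly q m) x (Poly1 q m x).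
Proof.
  unfold Poly, Poly1. apply (Cderiv_sum (fun k t => (RtoC (t ^ k) * q k)%C)). intro k.
  eapply Cderiv_eq.
  - apply (Cderiv_mul (fun t => RtoC (t ^ k)) (fun _ => q k)).
    + apply Cderiv_RtoC. apply derivable_pt_lim_pow.
    + apply Cderiv_const.
  - Cring.
Qed.

Lemma Cderiv_Poly1 q m x : Cderiv (Poly1 q m) x (Poly2 q m x).
Proof.
  unfold Poly1, Poly2. apply (Cderiv_sum (fun k t => (RtoC (INR k * t ^ pred k) * q k)%C)). intro k.
  eapply Cderiv_eq.
  - apply Cderiv_Rmon.
  - f_equal. f_equal. ring.
Qed.

Definition sd (a : C) (t : R) : C := (RtoC (exp (- t)) * cpow_real t a)%C.
Definition uu (a : C) (t : R) : C := (a * RtoC (/ t) - RtoC 1)%C.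
Definition uu' (a : C) (t : R) : C := (- a * RtoC (/ t) * RtoC (/ t))%C.

Lemma Cderiv_sd a x : 0 < x -> Cderiv (sd a) x (sd a x * uu a x)%C.
Proof.
  intros Hx. unfold sd, uu. eapply Cderiv_eq.
  - apply (Cderiv_mul (fun t => RtoC (exp (- t))) (fun t => cpow_real t a)).
    + apply Cderiv_RtoC. apply is_derive_Reals. auto_derive; auto. 
    + apply Cderiv_cpow; auto.
  - rewrite RtoC_mult, RtoC_opp. Cring.
Qed.

Lemma Cderiv_uu a x : 0 < x -> Cderiv (uu a) x (uu' a x).
Proof.
  intros Hx. unfold uu, uu'. eapply Cderiv_eq.
  - apply (Cderiv_add (fun t => (a * RtoC (/ t))%C) (fun _ => (- RtoC 1)%C)).
    + apply (Cderiv_mul (fun _ => a) (fun t => RtoC (/ t))).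
      * apply Cderiv_const.
      * apply Cderiv_RtoC. apply is_derive_Reals. auto_derive. { lra. } reflexivity.
    + apply Cderiv_const.
  - replace (- (1) * / (x * x))%R with (- (/ x * / x))%R by (field; lra).
    rewrite RtoC_opp, RtoC_mult. Cring.
Qed.

Definition HH a n t : C := (RtoC ((-1) ^ n) * (sd a t * Poly (coef a n) n t))%C.
Definition HH1 a n t : C := (RtoC ((-1) ^ n) *
  (sd a t * uu a t * Poly (coef a n) n t + sd a t * Poly1 (coef a n) n t))%C.
Definition HH2 a n t : C := (RtoC ((-1) ^ n) *
  (sd a t * (uu a t * uu a t + uu' a t) * Poly (coef a n) n t
   + RtoC 2 * sd a t * uu a t * Poly1 (coef a n) n t + sd a t * Poly2 (coef a n) n t))%C.

Lemma Cderiv_HH a n x : 0 < x -> Cderiv (HH a n) x (HH1 a n x).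
Proof.
  intros Hx. unfold HH, HH1. eapply Cderiv_eq.
  - apply (Cderiv_mul (fun _ => RtoC ((-1) ^ n)) (fun t => (sd a t * Poly (coef a n) n t)%C)).
    + apply Cderiv_const.
    + apply (Cderiv_mul (sd a) (Poly (coef a n) n)).
      * apply Cderiv_sd; auto.
      * apply Cderiv_Poly.
  - Cring.
Qed.

Lemma Cderiv_HH1 a n x : 0 < x -> Cderiv (HH1 a n) x (HH2 a n x).
Proof.
  intros Hx. unfold HH1, HH2. eapply Cderiv_eq.
  - apply (Cderiv_mul (fun _ => RtoC ((-1) ^ n))
      (fun t => (sd a t * uu a t * Poly (coef a n) n t + sd a t * Poly1 (coef a n) n t)%C)).
    + apply Cderiv_const.
    + apply (Cderiv_add (fun t => (sd a t * uu a t * Poly (coef a n) n t)%C)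
                        (fun t => (sd a t * Poly1 (coef a n) n t)%C)).
      * apply (Cderiv_mul (fun t => (sd a t * uu a t)%C) (Poly (coef a n) n)).
        -- apply (Cderiv_mul (sd a) (uu a)). apply Cderiv_sd; auto. apply Cderiv_uu; auto.
        -- apply Cderiv_Poly.
      * apply (Cderiv_mul (sd a) (Poly1 (coef a n) n)).
        -- apply Cderiv_sd; auto.
        -- apply Cderiv_Poly1.
  - Cring.
Qed.

Lemma Aop_HH a (Hnz2 : forall j, (RtoC 2 * a + RtoC (INR j))%C <> RtoC 0) n x : 0 < x ->
  Aop (HH a n) (HH1 a n) (HH2 a n) x = HH a (S n) x.
Proof.
  intros Hx. unfold Aop. rewrite !Cscale_C.
  unfold HH at 2. rewrite <- poly_step by auto.
  unfold HH, HH1, HH2, uu, uu'.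
  replace (RtoC (- x ^ 2)) with (- (RtoC x * RtoC x))%C
    by (rewrite <- RtoC_mult, <- RtoC_opp; f_equal; ring).
  replace (RtoC (x ^ 2)) with (RtoC x * RtoC x)%C by (rewrite <- RtoC_mult; f_equal; ring).
  replace (RtoC (- x)) with (- RtoC x)%C by (rewrite RtoC_opp; reflexivity).
  replace (RtoC ((-1) ^ S n)) with (- RtoC ((-1) ^ n))%C
    by (rewrite <- RtoC_opp; f_equal; simpl; ring).
  rewrite (RtoC_inv x) by lra.
  Cfield. intro E; apply RtoC_inj in E; lra.
Qed.

Lemma cpow_neg_mul a x : (cpow_real x (Cneg a) * cpow_real x a)%C = RtoC 1.
Proof.
  destruct a as [a b]. unfold cpow_real, Cneg, Re, Im, Cmult, RtoC; simpl.
  set (L := ln x).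
  replace (- a * L) with (- (a * L)) by ring.
  replace (- b * L) with (- (b * L)) by ring.
  rewrite cos_neg, sin_neg, exp_Ropp.
  assert (He : exp (a * L) <> 0) by (apply Rgt_not_eq, exp_pos).
  pose proof (sin2_cos2 (b * L)) as H. unfold Rsqr in H.
  f_equal; [rewrite <- H; field; auto | field; auto].

Qed.

Lemma main_ind alpha (Hnz2 : forall j, (RtoC 2 * alpha + RtoC (INR j))%C <> RtoC 0) n :
  exists g, Aiter (seed alpha) n g /\ forall x, 0 < x -> g x = HH alpha n x.
Proof.
  induction n.
  - exists (seed alpha). split; [constructor|]. intros x Hx.
    unfold HH, seed, sd, Poly. rewrite Csum_0, coef00 by auto. rewrite Cscale_C. simpl pow. Cring.
  - destruct IHn as [g [Ag Eg]].
    exists (Aop g (HH1 alpha n) (HH2 alpha n)). split.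
    + apply AiterS; auto.
      * intros x Hx. apply (Cderiv_ext (HH alpha n) g x _ Hx).
        { intros t Ht. symmetry; auto. }
        apply Cderiv_HH; auto.
      * intros x Hx. apply Cderiv_HH1; auto.
    + intros x Hx. rewrite <- Aop_HH by auto. unfold Aop. rewrite (Eg x Hx). reflexivity.
Qed.

Theorem lemma2p2 (alpha : Cx) (Hre : -1/2 < Re alpha) (Hnz : alpha <> (0, 0))
  (n : nat) :
  exists g : R -> Cx, Aiter (seed alpha) n g /\
    forall x : R, 0 < x ->
      Cmul (Cscale ((-1) ^ n * exp x) (cpow_real x (Cneg alpha))) (g x)
      = Csum (fun nu => Cscale (x ^ nu) (coef alpha n nu)) n.
Proof.
  pose proof (nz2 alpha Hre Hnz) as Hnz2.
  destruct (main_ind alpha Hnz2 n) as [g [Ag Eg]].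
  exists g. split; auto. intros x Hx.
  rewrite (Eg x Hx). unfold HH, sd.
  transitivity (Poly (coef alpha n) n x).
  2:{ unfold Poly. apply Csum_ext. intros k _. rewrite Cscale_C. reflexivity. }
  rewrite Cscale_C.
  assert (Hr : ((-1) ^ n * exp x * ((-1) ^ n) * exp (- x)) = 1).
  { replace ((-1) ^ n * exp x * ((-1) ^ n) * exp (- x)) with
      (((-1) * (-1)) ^ n * (exp x * exp (- x))) by (rewrite Rpow_mult_distr; ring).
    rewrite <- exp_plus, Rplus_opp_r, exp_0. replace ((-1) * (-1)) with 1 by ring.
    rewrite pow1. ring. }
  transitivity (RtoC ((-1) ^ n * exp x * ((-1) ^ n) * exp (- x)) *
     (cpow_real x (Cneg alpha) * cpow_real x alpha) * Poly (coef alpha n) n x)%C.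
  { rewrite !RtoC_mult. Cring. }
  rewrite Hr, cpow_neg_mul. Cring.
Qed.
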